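(* Let $p/q$ be a reduced fraction with $q\ge1$. For any integer $0 \le N <q$ and any $x \in \mathbb{R}$, \[ P_N (p/q,x) \cdot P_{q-N-1} (p/q,-x) = \begin{cases} \frac{|\sin (\pi qx)|}{|\sin (\pi x)|} & \text{if } x \notin \mathbb{Z}, \\ q & \text{if } x \in \mathbb{Z} . \end{cases} \] In particular, for any $x \in \mathbb{R}$, $P_{q-1}(p/q,x)$ equals $\frac{|\sin (\pi qx)|}{|\sin (\pi x)|}$ if $x\notin\mathbb{Z}$ and $q$ if $x\in\mathbb{Z}$.
   Context: For real $\beta,x$ and integer $N\ge0$, $P_N(\beta,x)=\prod_{n=1}^N|2\sin(\pi(n\beta+x))|$ (empty product $=1$). *)

(* Defs.v *)
From Stdlib Require Import Reals ZArith.
Open Scope R_scope.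

Fixpoint P (N : nat) (beta x : R) : R :=
  match N with
  | O => 1
  | S m => P m beta x * Rabs (2 * sin (PI * (INR (S m) * beta + x)))
  end.

Definition is_integer (x : R) : Prop := exists k : Z, x = IZR k.

(* Main.v *)
Require Import Defs.
From Stdlib Require Import Reals ZArith.
Open Scope R_scope.
From Stdlib Require Import Lra Lia Znumtheory.
Open Scope R_scope.

Definition hn (p : Z) (q n : nat) : nat :=
  Z.to_nat (Z.modulo (- (Z.of_nat n * p)) (Z.of_nat q)).

Lemma hn_lt p q n : (0 < q)%nat -> (hn p q n < q)%nat.
Proof.
intros hq. unfold hn.
assert (h := Z.mod_pos_bound (- (Z.of_nat n * p)) (Z.of_nat q)). lia.
Qed.

Lemma hn0 p q : hn p q 0 = 0%nat.
Proof. unfold hn. replace (- (Z.of_nat 0 * p))%Z with 0%Z by lia. rewrite Zmod_0_l. reflexivity. Qed.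

Lemma hn_inj p q a b : (0 < q)%nat -> Z.gcd p (Z.of_nat q) = 1%Z ->
  (a < q)%nat -> (b < q)%nat -> hn p q a = hn p q b -> a = b.
Proof.
intros hq hg ha hb e. unfold hn in e.
assert (h1 := Z.mod_pos_bound (- (Z.of_nat a * p)) (Z.of_nat q)).
assert (h2 := Z.mod_pos_bound (- (Z.of_nat b * p)) (Z.of_nat q)).
assert (e1 := Z_div_mod_eq_full (- (Z.of_nat a * p)) (Z.of_nat q)).
assert (e2 := Z_div_mod_eq_full (- (Z.of_nat b * p)) (Z.of_nat q)).
set (ra := ((- (Z.of_nat a * p)) mod Z.of_nat q)%Z) in *.
set (rb := ((- (Z.of_nat b * p)) mod Z.of_nat q)%Z) in *.
set (da := ((- (Z.of_nat a * p)) / Z.of_nat q)%Z) in *.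
set (db := ((- (Z.of_nat b * p)) / Z.of_nat q)%Z) in *.
assert (era : ra = rb) by lia.
assert (hd : (Z.of_nat q | p * (Z.of_nat b - Z.of_nat a))%Z).
{ exists (da - db)%Z. rewrite era in e1. nia. }
assert (hr : rel_prime (Z.of_nat q) p).
{ apply Zgcd_1_rel_prime. rewrite Z.gcd_comm. exact hg. }
assert (hd2 := Gauss _ _ _ hd hr).
destruct hd2 as [k hk]. destruct (Z.lt_trichotomy k 0) as [hk0|[hk0|hk0]]; [nia| subst k; lia |nia].
Qed.

Lemma hn_rel p q n x : (0 < q)%nat ->
  exists m : Z, INR n * (IZR p / INR q) + x = (x - INR (hn p q n) / INR q) + IZR m.
Proof.
intros hq. unfold hn.
assert (h1 := Z.mod_pos_bound (- (Z.of_nat n * p)) (Z.of_nat q)).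
assert (e1 := Z_div_mod_eq_full (- (Z.of_nat n * p)) (Z.of_nat q)).
set (r := ((- (Z.of_nat n * p)) mod Z.of_nat q)%Z) in *.
set (d := ((- (Z.of_nat n * p)) / Z.of_nat q)%Z) in *.
exists (- d)%Z.
assert (hq' : INR q <> 0) by (apply not_0_INR; lia).
rewrite !INR_IZR_INZ.
rewrite Z2Nat.id by lia.
rewrite INR_IZR_INZ in hq'.
apply (f_equal IZR) in e1.
rewrite opp_IZR, mult_IZR, plus_IZR, mult_IZR in e1.
rewrite opp_IZR.
apply (Rmult_eq_reg_r (IZR (Z.of_nat q))); [|exact hq'].
field_simplify; [|exact hq'|exact hq'].
nra.
Qed.
Module Aux.
From HB Require Import structures.
From mathcomp Require Import all_boot all_order all_algebra.
From mathcomp Require Import complex.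
From mathcomp Require Import Rstruct.
From mathcomp Require Import zify.
Import Order.TTheory GRing.Theory Num.Theory.
Open Scope R_scope.

Ltac toR := rewrite -?RplusE -?RminusE -?RmultE -?RoppE.

Definition ex (t : R) : R[i] := Complex (cos t) (sin t).
Definition nm2 (w : R[i]) : R := complex.Re w * complex.Re w + complex.Im w * complex.Im w.
Definition G (t : R) : R := 4 * (sin (PI * t) * sin (PI * t)).

Lemma exD a b : (ex a * ex b)%R = ex (a + b).
Proof.
rewrite /ex /=. rewrite cos_plus sin_plus. congr Complex; rewrite /=; toR; ring.
Qed.

Lemma ex0 : ex 0 = 1%R.
Proof. by rewrite /ex cos_0 sin_0. Qed.

Lemma ex_pow t k : (ex t ^+ k)%R = ex (INR k * t).
Proof.
elim: k => [|k IH]; first by rewrite /= Rmult_0_l ex0.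
by rewrite exprS IH exD S_INR; congr ex; ring.
Qed.

Lemma nm2M a b : nm2 (a * b)%R = nm2 a * nm2 b.
Proof. case: a => a1 a2; case: b => b1 b2; rewrite /nm2 /=; toR; ring. Qed.

Lemma nm2_ex a b : nm2 (ex a - ex b)%R = G ((a - b) / (2 * PI)).
Proof.
rewrite /nm2 /ex /G /=.
have -> : PI * ((a - b) / (2 * PI)) = (a - b) / 2 by field; apply PI_neq0.
have h := cos_2a_sin ((a-b)/2).
replace (2 * ((a - b) / 2)) with (a - b) in h by field.
rewrite cos_minus in h. toR. have ha := sin2_cos2 a. have hb := sin2_cos2 b. rewrite /Rsqr in ha hb. nra.
Qed.

Lemma cos_ne1 t : 0 < t < 2 * PI -> cos t <> 1.
Proof.
move=> [h1 h2] hc.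
have h := cos_2a_sin (t/2).
replace (2 * (t / 2)) with t in h by field.
have : 0 < sin (t/2) by apply sin_gt_0; lra.
nra.
Qed.

Lemma prim_om (q : nat) : (0 < q)%N -> primitive_root_of_unity q (ex (2 * PI / INR q)).
Proof.
move=> q0; rewrite /primitive_root_of_unity q0 /=.
have qR : INR q <> 0 by apply not_0_INR; lia.
apply/forallP => i; rewrite unity_rootE ex_pow.
case: (@eqP _ i.+1 q) => [->|hne].
  have -> : INR q * (2 * PI / INR q) = 2 * PI by field.
  by rewrite /ex cos_2PI sin_2PI eqxx.
rewrite eqbF_neg; apply/eqP => /(congr1 (@complex.Re R)) /=.
apply: cos_ne1.
have hi : (i.+1 < q)%N by have := ltn_ord i; lia.
have hq : (INR i.+1 < INR q) by apply lt_INR; lia.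
have : 0 < INR i.+1 by apply lt_0_INR; lia.
have := PI_RGT_0.
move=> hp h1; split.
  apply Rmult_lt_0_compat => //; apply Rdiv_lt_0_compat; lra.
have -> : INR i.+1 * (2 * PI / INR q) = 2 * PI * (INR i.+1 / INR q) by field.
have : INR i.+1 / INR q < 1.
  apply (Rmult_lt_reg_r (INR q)); first lra.
  by rewrite /Rdiv Rmult_assoc Rinv_l // Rmult_1_r Rmult_1_l.
nra.
Qed.
Lemma prodsub (F : fieldType) (n : nat) (z : F) : primitive_root_of_unity n z ->
  forall w, (\prod_(1 <= i < n) (w - z ^+ i) = \sum_(i < n) w ^+ i)%R.
Proof.
move=> prim w.
have h := factor_Xn_sub_1 prim.
have n0 := prim_order_gt0 prim.
rewrite big_ltn // expr0 subrX1 in h.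
have : (\prod_(1 <= i < n) ('X - (z ^+ i)%:P) = \sum_(i < n) 'X^i)%R.
  apply: (mulfI (x := ('X - 1)%R)); last by rewrite -h.
  by rewrite -polyC1 polyXsubC_eq0.
move/(congr1 (fun p => p.[w]%R)).
by rewrite horner_prod horner_sum; under eq_bigr do rewrite hornerXsubC;
   under [in RHS]eq_bigr do rewrite hornerXn.
Qed.

Lemma nm2_1 : nm2 1%R = 1.
Proof. rewrite /nm2 /= -R1E -R0E; ring. Qed.

Lemma nm2_prod (I : Type) (r : seq I) (P : pred I) (F : I -> R[i]) :
  nm2 (\big[GRing.mul/1%R]_(i <- r | P i) F i) = \big[Rmult/1]_(i <- r | P i) nm2 (F i).
Proof. exact: (big_morph nm2 nm2M nm2_1). Qed.

Lemma K0 (q : nat) x : (0 < q)%N ->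
  \big[Rmult/1]_(1 <= k < q) G (x - INR k / INR q) =
  nm2 (\big[GRing.add/0%R]_(i < q) (ex (2 * PI * x)) ^+ i)%R.
Proof.
move=> q0.
have qR : INR q <> 0 by apply not_0_INR; lia.
rewrite -(prodsub _ _ _ (prim_om _ q0)) nm2_prod.
apply: eq_bigr => k _.
rewrite ex_pow nm2_ex; congr G.
field; split => //; apply PI_neq0.
Qed.

Lemma K1 (q : nat) x : (0 < q)%N ->
  \big[Rmult/1]_(1 <= k < q) G (x - INR k / INR q) * G x = G (INR q * x).
Proof.
move=> q0.
rewrite K0 //.
have h := subrX1 (ex (2 * PI * x)) q.
have e1 : G x = nm2 (ex (2 * PI * x) - ex 0)%R.
  rewrite nm2_ex; congr G; field; apply PI_neq0.
rewrite e1 Rmult_comm -nm2M ex0 -h ex_pow -ex0 nm2_ex; congr G; field; apply PI_neq0.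
Qed.

Lemma natC n : ((n%:R : R[i]) = Complex (INR n) 0)%R.
Proof.
elim: n => [|n IH]; first by [].
rewrite mulrS IH S_INR /=; congr Complex; rewrite -?R1E -?R0E; toR; ring.
Qed.

Lemma ex_int x : is_integer x -> ex (2 * PI * x) = 1%R.
Proof.
move=> [m ->].
have hs : sin (PI * IZR m) = 0 by apply sin_eq_0_1; exists m; ring.
have hc := cos_2a_sin (PI * IZR m).
rewrite hs in hc.
have hs2 : sin (2 * PI * IZR m) = 0.
  apply sin_eq_0_1; exists (Z.mul 2 m); rewrite mult_IZR; ring.
rewrite /ex hs2. replace (2 * PI * IZR m) with (2 * (PI * IZR m)) by ring. rewrite hc. transitivity (Complex (IZR 1) (IZR 0)); [congr Complex; ring | by []].
Qed.

Lemma K2 (q : nat) x : (0 < q)%N -> is_integer x ->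
  \big[Rmult/1]_(1 <= k < q) G (x - INR k / INR q) = INR q * INR q.
Proof.
move=> q0 hx.
rewrite K0 // ex_int //.
under eq_bigr do rewrite expr1n.
rewrite sumr_const card_ord natC /nm2 /= -R0E; ring. Qed.

Lemma G_nz x : ~ is_integer x -> G x <> 0.
Proof.
move=> hx h; apply hx.
have : sin (PI * x) = 0 by rewrite /G in h; nra.
move/sin_eq_0_0 => [k hk]; exists k.
have := PI_RGT_0; nra.
Qed.

Lemma G_per t m : G (t + IZR m) = G t.
Proof.
rewrite /G.
have hs : sin (IZR m * PI) = 0 by apply sin_eq_0_1; exists m; ring.
have hc := sin2_cos2 (IZR m * PI). rewrite /Rsqr hs in hc.
replace (PI * (t + IZR m)) with (PI * t + IZR m * PI) by ring.
rewrite sin_plus hs. nra.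
Qed.

Lemma G_neg t : G (- t) = G t.
Proof. rewrite /G. replace (PI * - t) with (- (PI * t)) by ring. rewrite sin_neg; ring. Qed.

Lemma nat_ord (q : nat) (F : nat -> R) :
  \big[Rmult/1]_(1 <= n < q) F n = \big[Rmult/1]_(i < q | (0 < i)%N) F i.
Proof.
rewrite -big_mkord.
case: q => [|q]; first by rewrite !big_geq.
rewrite [RHS]big_ltn_cond // /=.
rewrite big_nat_cond [RHS]big_nat_cond; apply: eq_bigl => i.
by case: i.
Qed.

Lemma R1 (p : Z) (q : nat) x : (0 < q)%N -> Z.gcd p (Z.of_nat q) = Z.one ->
  \big[Rmult/1]_(1 <= n < q) G (INR n * (IZR p / INR q) + x) =
  \big[Rmult/1]_(1 <= k < q) G (x - INR k / INR q).
Proof.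
move=> q0 hg.
rewrite !nat_ord.
have hlt : forall i : 'I_q, (hn p q i < q)%N.
  by move=> i; apply/ssrnat.ltP; apply hn_lt; apply/ssrnat.ltP.
pose h (i : 'I_q) : 'I_q := Ordinal (hlt i).
have hinj : injective h.
  move=> a b /(congr1 val) /= e; apply: val_inj => /=.
  exact: (hn_inj p q _ _ (ssrnat.ltP q0) hg (ssrnat.ltP (ltn_ord a)) (ssrnat.ltP (ltn_ord b)) e).
rewrite [RHS](reindex_inj hinj) /=.
apply: eq_big => i.
- case: i => [[|i] hi] /=; first by rewrite hn0.
  case e: (hn p q i.+1) => [|k] //.
  have := hn_inj p q i.+1 0 (ssrnat.ltP q0) hg (ssrnat.ltP hi) (ssrnat.ltP q0).
  by rewrite e hn0 => /(_ erefl).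
- move=> _; have [m ->] := hn_rel p q i x (ssrnat.ltP q0).
  by rewrite G_per.
Qed.

Lemma abs_sq u : Rabs u * Rabs u = u * u.
Proof. by rewrite -/(Rsqr (Rabs u)) -Rsqr_abs. Qed.

Lemma P_sq N b x : P N b x * P N b x =
  \big[Rmult/1]_(0 <= n < N) G (INR n.+1 * b + x).
Proof.
elim: N => [|N IH]; first by rewrite big_geq //= Rmult_1_l.
rewrite big_nat_recr // -IH.
have hP : P N.+1 b x = P N b x * Rabs (2 * sin (PI * (INR N.+1 * b + x))) by [].
rewrite hP /G.
set A := Rabs _. set s := sin _.
have e : A * A = 2 * s * (2 * s) by apply: abs_sq.
replace (P N b x * A * (P N b x * A)) with (P N b x * P N b x * (A * A)) by ring.
rewrite e /=; ring.
Qed.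

Lemma P_ge0 N b x : 0 <= P N b x.
Proof.
elim: N => [|N IH] /=; first lra.
apply Rmult_le_pos => //; apply Rabs_pos.
Qed.

Lemma comb (p : Z) (q N : nat) x : (N < q)%N ->
  \big[Rmult/1]_(0 <= n < N) G (INR n.+1 * (IZR p / INR q) + x) *
  \big[Rmult/1]_(0 <= n < q - N - 1) G (INR n.+1 * (IZR p / INR q) + - x) =
  \big[Rmult/1]_(1 <= n < q) G (INR n * (IZR p / INR q) + x).
Proof.
move=> hN.
have qR : INR q <> 0 by apply not_0_INR; lia.
set F := fun n => G (INR n * (IZR p / INR q) + x).
have e1 : \big[Rmult/1]_(0 <= n < N) G (INR n.+1 * (IZR p / INR q) + x) =
          \big[Rmult/1]_(1 <= n < N.+1) F n by rewrite big_add1.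
have e2 : \big[Rmult/1]_(0 <= n < q - N - 1) G (INR n.+1 * (IZR p / INR q) + - x) =
          \big[Rmult/1]_(N.+1 <= n < q) F n.
  rewrite -(add0n N.+1) big_addn big_nat_rev.
  have -> : (q - N.+1 = q - N - 1)%N by lia.
  apply: eq_big_nat => i hi.
  rewrite /F.
  have hk : (((0 + (q - N - 1) - i.+1).+1) = q - (i + N.+1))%N by lia.
  rewrite hk minus_INR; last by apply/ssrnat.leP; lia.
  have -> : (INR q - INR (i + N.+1)) * (IZR p / INR q) + - x =
            - (INR (i + N.+1) * (IZR p / INR q) + x) + IZR p by field.
  by rewrite G_per G_neg.
rewrite e1 e2 -big_cat_nat //; lia.
Qed.

Lemma sq_eq a b : 0 <= a -> 0 <= b -> a * a = b * b -> a = b.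
Proof. move=> ha hb e; apply Rsqr_inj => //. Qed.

Lemma AA (p : Z) (q N : nat) x : (0 < q)%N -> Z.gcd p (Z.of_nat q) = Z.one -> (N < q)%N ->
  let A := P N (IZR p / INR q) x * P (q - N - 1) (IZR p / INR q) (- x) in
  A * A = \big[Rmult/1]_(1 <= k < q) G (x - INR k / INR q).
Proof.
move=> q0 hg hN A.
rewrite -(R1 p q x q0 hg) -(comb p q N x hN) -!P_sq /A; ring.
Qed.

Lemma L1 (p : Z) (q N : nat) x : (0 < q)%N -> Z.gcd p (Z.of_nat q) = Z.one -> (N < q)%N ->
  ~ is_integer x ->
  P N (IZR p / INR q) x * P (q - N - 1) (IZR p / INR q) (- x) =
  Rabs (sin (PI * INR q * x)) / Rabs (sin (PI * x)).
Proof.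
move=> q0 hg hN hx.
have e := AA p q N x q0 hg hN. simpl in e.
have k1 := K1 q x q0.
have gx := G_nz x hx.
have hs : sin (PI * x) <> 0 by move=> h; apply gx; rewrite /G h; ring.
have hs' : Rabs (sin (PI * x)) <> 0 by apply Rabs_no_R0.
apply sq_eq.
- apply Rmult_le_pos; apply P_ge0.
- apply Rmult_le_pos; [apply Rabs_pos | apply Rlt_le, Rinv_0_lt_compat; have := Rabs_pos (sin (PI * x)); lra].
rewrite e.
have -> : \big[Rmult/1]_(1 <= k < q) G (x - INR k / INR q) = G (INR q * x) / G x.
  rewrite -k1; field; exact gx.
rewrite /G.
have -> : Rabs (sin (PI * INR q * x)) / Rabs (sin (PI * x)) *
  (Rabs (sin (PI * INR q * x)) / Rabs (sin (PI * x))) =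
  (Rabs (sin (PI * INR q * x)) * Rabs (sin (PI * INR q * x))) /
  (Rabs (sin (PI * x)) * Rabs (sin (PI * x))) by field.
rewrite !abs_sq -Rmult_assoc.
replace (PI * INR q * x) with (PI * (INR q * x)) by ring. field. exact hs.
Qed.

Lemma L2 (p : Z) (q N : nat) x : (0 < q)%N -> Z.gcd p (Z.of_nat q) = Z.one -> (N < q)%N ->
  is_integer x ->
  P N (IZR p / INR q) x * P (q - N - 1) (IZR p / INR q) (- x) = INR q.
Proof.
move=> q0 hg hN hx.
have e := AA p q N x q0 hg hN. simpl in e.
rewrite K2 // in e.
apply sq_eq => //.
- apply Rmult_le_pos; apply P_ge0.
- apply pos_INR.
Qed.

Lemma F1 (p : Z) (q N : nat) x : le 1 q -> Z.gcd p (Z.of_nat q) = Zpos xH -> lt N q ->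
  ~ is_integer x ->
  P N (IZR p / INR q) x * P (q - N - 1) (IZR p / INR q) (- x) =
  Rabs (sin (PI * INR q * x)) / Rabs (sin (PI * x)).
Proof. move=> h1 h2 h3; apply: L1 => //; by apply/ssrnat.leP. Qed.

Lemma F2 (p : Z) (q N : nat) x : le 1 q -> Z.gcd p (Z.of_nat q) = Zpos xH -> lt N q ->
  is_integer x ->
  P N (IZR p / INR q) x * P (q - N - 1) (IZR p / INR q) (- x) = INR q.
Proof. move=> h1 h2 h3; apply: L2 => //; by apply/ssrnat.leP. Qed.

End Aux.

Theorem proposition1 (p : Z) (q : nat) (hq : (1 <= q)%nat)
  (hcop : Z.gcd p (Z.of_nat q) = 1%Z) :
  (forall (N : nat) (x : R), (N < q)%nat ->
     (~ is_integer x ->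
        P N (IZR p / INR q) x * P (q - N - 1) (IZR p / INR q) (- x) =
        Rabs (sin (PI * INR q * x)) / Rabs (sin (PI * x))) /\
     (is_integer x ->
        P N (IZR p / INR q) x * P (q - N - 1) (IZR p / INR q) (- x) = INR q))
  /\
  (forall x : R,
     (~ is_integer x ->
        P (q - 1) (IZR p / INR q) x =
        Rabs (sin (PI * INR q * x)) / Rabs (sin (PI * x))) /\
     (is_integer x -> P (q - 1) (IZR p / INR q) x = INR q)).
Proof.
  assert (H1 : forall (N : nat) (x : R), (N < q)%nat ->
     (~ is_integer x ->
        P N (IZR p / INR q) x * P (q - N - 1) (IZR p / INR q) (- x) =
        Rabs (sin (PI * INR q * x)) / Rabs (sin (PI * x))) /\
     (is_integer x ->
        P N (IZR p / INR q) x * P (q - N - 1) (IZR p / INR q) (- x) = INR q)).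
  { intros N x hN. split.
    - intros hx. exact (Aux.F1 p q N x hq hcop hN hx).
    - intros hx. exact (Aux.F2 p q N x hq hcop hN hx). }
  split; [exact H1|].
  intros x.
  assert (hlt : (q - 1 < q)%nat) by lia.
  destruct (H1 (q - 1)%nat x hlt) as [h1 h2].
  replace (q - (q - 1) - 1)%nat with 0%nat in h1, h2 by lia.
  simpl P in h1, h2. rewrite Rmult_1_r in h1, h2.
  split; assumption.
Qed.
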